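(* For every integer $m\ge1$, $$\mathfrak p^{(2m)}=\sum_{a=0}^{m-1}q^{(3-2m)a}\begin{bmatrix}m-1\\ a\end{bmatrix}_{q^2}\mathfrak g^{(2m-2a)},\qquad \mathfrak p^{(2m+1)}=\sum_{a=0}^{m-1}q^{(1-2m)a}\begin{bmatrix}m-1\\ a\end{bmatrix}_{q^2}\mathfrak g^{(2m-2a+1)}.$$ In particular, $\mathfrak p^{(n)}(\kappa)\in\mathbb Z[q,q^{-1}]$ for all $n\in\mathbb N$ and all $\kappa=[2\ell-1]$ with $\ell\in\mathbb Z$.
   Context: $q$ is an indeterminate, $[n]=\frac{q^n-q^{-n}}{q-q^{-1}}$ for $n\in\mathbb Z$, $[n]!=[1]\cdots[n]$, $[0]!=1$. For $0\le a\le N$, $\begin{bmatrix}N\\ a\end{bmatrix}_{q^2}$ denotes the balanced Gaussian binomial coefficient in $q^2$, i.e. $\frac{[N]_{q^2}!}{[a]_{q^2}![N-a]_{q^2}!}$ with $[k]_{q^2}=\frac{q^{2k}-q^{-2k}}{q^2-q^{-2}}$. The polynomials $\mathfrak p_n(x)$ are defined by $\mathfrak p_0=1$, $\mathfrak p_n=0$ for $n<0$, $\mathfrak p_{n+1}=x\,\mathfrak p_n+q^{2-2n}[n][n-2]\mathfrak p_{n-1}$ ($n\ge0$); $\mathfrak p^{(n)}=\mathfrak p_n/[n]!$. The polynomials $\mathfrak g_n(x)$ are $\mathfrak g_{2m}(x)=\prod_{i=1}^{m}(x^2-[2i-1]^2)$ and $\mathfrak g_{2m+1}(x)=x\prod_{i=1}^m(x^2-[2i-1]^2)$;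 $\mathfrak g^{(n)}=\mathfrak g_n/[n]!$. *)

(* Defs.v *)
From mathcomp Require Import all_boot all_order all_algebra.
Set Implicit Arguments. Unset Strict Implicit. Unset Printing Implicit Defensive.
Import Order.TTheory GRing.Theory Num.Theory.
Local Open Scope ring_scope.

Notation tofrac := (@FracField.tofrac _).

(* The field Q(q) realised as the fraction field of Z[q]; q is the indeterminate. *)
Definition Fq : fieldType := {fraction {poly int}}.
Definition qq : Fq := tofrac ('X : {poly int}).

Definition in_Zqqinv (x : Fq) : Prop :=
  exists (p : {poly int}) (k : nat), x = tofrac p / qq ^+ k.

Definition qint (n : int) : Fq := (qq ^ n - qq ^ (- n)) / (qq - qq^-1).
Definition qfact (n : nat) : Fq := \prod_(i < n) qint (i.+1)%:Z.

Definition qint2 (k : int) : Fq :=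
  (qq ^ (2 * k) - qq ^ (- (2 * k))) / (qq ^+ 2 - qq ^- 2).
Definition qfact2 (n : nat) : Fq := \prod_(i < n) qint2 (i.+1)%:Z.
(* balanced Gaussian binomial in q^2, for 0 <= a <= N *)
Definition qbinom2 (N a : nat) : Fq := qfact2 N / (qfact2 a * qfact2 (N - a)).

(* pair (p_n, p_{n+1}); p_0 = 1, p_1 = x (since p_{-1} = 0),
   p_{n+2} = x p_{n+1} + q^{2-2(n+1)} [n+1][n-1] p_n *)
Fixpoint ppair (n : nat) : {poly Fq} * {poly Fq} :=
  match n with
  | 0 => (1, 'X)
  | n'.+1 => let (a, b) := ppair n' in
      (b, 'X * b + (qq ^ (2 - 2 * (n'.+1)%:Z) * qint (n'.+1)%:Z
                     * qint (n'%:Z - 1))%:P * a)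
  end.
Definition pfrak (n : nat) : {poly Fq} := (ppair n).1.
Definition pfrakdiv (n : nat) : {poly Fq} := (qfact n)^-1 *: pfrak n.

Definition gfrak (n : nat) : {poly Fq} :=
  (if odd n then 'X else 1) *
  \prod_(i < n./2) ('X ^+ 2 - (qint (2 * (i.+1)%:Z - 1) ^+ 2)%:P).
Definition gfrakdiv (n : nat) : {poly Fq} := (qfact n)^-1 *: gfrak n.

(* Main.v *)
Require Import Defs.
From mathcomp Require Import all_boot all_order all_algebra.
From mathcomp Require Import ring zify.
Import Order.TTheory GRing.Theory Num.Theory.
Set Implicit Arguments. Unset Strict Implicit. Unset Printing Implicit Defensive.
Local Open Scope ring_scope.

Definition qi (F : fieldType) (q : F) (n : int) : F := (q ^ n - q ^ (- n)) / (q - q^-1).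
Definition qf (F : fieldType) (q : F) (n : nat) : F := \prod_(i < n) qi q (i.+1)%:Z.
Definition qi2 (F : fieldType) (q : F) (k : int) : F :=
  (q ^ (2 * k) - q ^ (- (2 * k))) / (q ^+ 2 - q ^- 2).
Definition qf2 (F : fieldType) (q : F) (n : nat) : F := \prod_(i < n) qi2 q (i.+1)%:Z.
Definition qb2 (F : fieldType) (q : F) (N a : nat) : F := qf2 q N / (qf2 q a * qf2 q (N - a)).
Fixpoint pp (F : fieldType) (q : F) (n : nat) : {poly F} * {poly F} :=
  match n with
  | 0 => (1, 'X)
  | n'.+1 => let (a, b) := pp q n' in
      (b, 'X * b + (q ^ (2 - 2 * (n'.+1)%:Z) * qi q (n'.+1)%:Z
                     * qi q (n'%:Z - 1))%:P * a)
  end.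
Definition pf (F : fieldType) (q : F) (n : nat) : {poly F} := (pp q n).1.
Definition pd (F : fieldType) (q : F) (n : nat) : {poly F} := (qf q n)^-1 *: pf q n.
Definition gf (F : fieldType) (q : F) (n : nat) : {poly F} :=
  (if odd n then 'X else 1) *
  \prod_(i < n./2) ('X ^+ 2 - (qi q (2 * (i.+1)%:Z - 1) ^+ 2)%:P).
Definition gd (F : fieldType) (q : F) (n : nat) : {poly F} := (qf q n)^-1 *: gf q n.


Definition good (F : fieldType) (q : F) := q != 0 /\ forall n : nat, (0 < n)%N -> q ^+ n != 1.

Lemma good0 (F : fieldType) (q : F) : good q -> q != 0.
Proof. by case. Qed.

Lemma qz_neq0 (F : fieldType) (q : F) (z : int) : good q -> q ^ z != 0.
Proof. by move=> [h _]; apply: expfz_neq0. Qed.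

Lemma qz_neq1 (F : fieldType) (q : F) (z : int) : good q -> z != 0 -> q ^ z != 1.
Proof.
move=> [h0 h1]; case: z => [n|n] /=.
  by move=> nz; apply: h1; rewrite lt0n.
move=> _; rewrite NegzE -invr_expz; apply/negP => /eqP H.
have := h1 n.+1 (ltn0Sn n); rewrite -[q ^+ n.+1]invrK.
by rewrite [(q ^+ n.+1)^-1]H invr1 eqxx.
Qed.

Lemma qd_neq0 (F : fieldType) (q : F) : good q -> q - q^-1 != 0.
Proof.
move=> hq; have h0 := good0 hq.
have -> : q - q^-1 = (q ^+ 2 - 1) / q by field.
rewrite mulf_neq0 ?invr_eq0 // subr_eq0; exact: (hq.2 2%N).
Qed.

Lemma q2m1 (F : fieldType) (q : F) : good q -> q * q - 1 != 0.
Proof. by move=> hq; rewrite -expr2 subr_eq0; exact: (hq.2 2%N). Qed.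

Ltac fside hq := rewrite ?(good0 hq) ?(q2m1 hq) ?(qd_neq0 hq) ?(qz_neq0 _ hq) //.

Lemma qzN (F : fieldType) (q : F) (z : int) : q ^ (- z) = (q ^ z)^-1.
Proof. by rewrite invr_expz. Qed.

Ltac qexp h0 := rewrite ?opprD ?opprK ?(@expfzDr _ _ _ _ h0) ?qzN ?expr1z.

Lemma qi_add (F : fieldType) (q : F) (x y : int) : good q ->
  qi q (x + y) = q ^ y * qi q x + q ^ (- x) * qi q y.
Proof.
move=> hq; have h0 := good0 hq; have hd := qd_neq0 hq.
have hx := qz_neq0 x hq; have hy := qz_neq0 y hq.
rewrite /qi; qexp h0; field; fside hq.
Qed.

Lemma qi0 (F : fieldType) (q : F) : qi q 0 = 0.
Proof. by rewrite /qi oppr0 subrr mul0r. Qed.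

Lemma qi1 (F : fieldType) (q : F) : good q -> qi q 1 = 1.
Proof. by move=> hq; rewrite /qi expr1z exprN1 divff // qd_neq0. Qed.

Lemma qiN (F : fieldType) (q : F) (x : int) : qi q (- x) = - qi q x.
Proof. by rewrite /qi opprK -mulNr opprB. Qed.

Lemma qi_sq (F : fieldType) (q : F) (x y : int) : good q ->
  qi q x ^+ 2 - qi q y ^+ 2 = qi q (x - y) * qi q (x + y).
Proof.
move=> hq; have h0 := good0 hq.
rewrite /qi; qexp h0; field; fside hq.
Qed.

Lemma qi_sum (F : fieldType) (q : F) (x y : int) : good q ->
  qi q (x + y) + qi q (x - y) = qi q x * (q ^ y + q ^ (- y)).
Proof.
move=> hq; have h0 := good0 hq.
rewrite /qi; qexp h0; field; fside hq.
Qed.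

Lemma qi_dbl (F : fieldType) (q : F) (k : int) : good q ->
  qi q (2 * k) = qi q k * (q ^ k + q ^ (- k)).
Proof.
move=> hq; have h0 := good0 hq.
have -> : 2 * k = k + k by ring.
rewrite /qi; qexp h0; field; fside hq.
Qed.

Lemma qi_neq0 (F : fieldType) (q : F) (z : int) : good q -> z != 0 -> qi q z != 0.
Proof.
move=> hq hz; rewrite /qi mulf_neq0 ?invr_eq0 ?qd_neq0 //.
rewrite subr_eq0; apply/negP => /eqP H.
have : q ^ (z + z) == 1.
  by rewrite (expfzDr _ _ (good0 hq)) {1}H qzN mulVf ?qz_neq0.
by apply/negP; apply: qz_neq1 => //; rewrite -mulr2n mulrn_eq0 negb_or hz.
Qed.

Lemma qi2E (F : fieldType) (q : F) (k : int) : good q ->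
  qi2 q k = qi q (2 * k) / qi q 2.
Proof.
move=> hq; have h0 := good0 hq.
rewrite /qi2 /qi -exprnP -exprnN (qzN q (2 * k)).
field; fside hq; by rewrite -expr2 -exprM subr_eq0 (hq.2 4%N isT).
Qed.

Lemma pp_fst (F : fieldType) (q : F) n : (pp q n.+1).1 = (pp q n).2.
Proof. by rewrite /=; case: (pp q n). Qed.

Lemma pf_rec (F : fieldType) (q : F) n : pf q n.+2 = 'X * pf q n.+1 +
   (q ^ (2 - 2 * (n.+1)%:Z) * qi q (n.+1)%:Z * qi q (n%:Z - 1))%:P * pf q n.
Proof.
rewrite /pf pp_fst [(pp q n.+1).1]pp_fst /=.
by case: (pp q n).
Qed.

Lemma qfS (F : fieldType) (q : F) n : qf q n.+1 = qf q n * qi q (n.+1)%:Z.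
Proof. by rewrite /qf big_ord_recr. Qed.

Lemma qf_neq0 (F : fieldType) (q : F) n : good q -> qf q n != 0.
Proof.
move=> hq; rewrite /qf; apply/prodf_neq0 => i _; apply: qi_neq0 => //.
Qed.

Lemma qf0 (F : fieldType) (q : F) : qf q 0 = 1.
Proof. by rewrite /qf big_ord0. Qed.

Lemma pd_rec (F : fieldType) (q : F) n : good q ->
  qi q (n.+2)%:Z *: pd q n.+2 = 'X * pd q n.+1 + (q ^ (- 2 * n%:Z) * qi q (n%:Z - 1)) *: pd q n.
Proof.
move=> hq.
have e : 2 - 2 * (n.+1)%:Z = - 2 * n%:Z by rewrite intS; ring.
rewrite /pd pf_rec e !qfS [LHS]scalerA scalerDr mul_polyC !scalerA scalerAr.
have h1 := qf_neq0 n hq; have h2 : qi q (n.+1)%:Z != 0 by apply: qi_neq0.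
have h3 : qi q (n.+2)%:Z != 0 by apply: qi_neq0.
congr (_ * (_ *: _) + _ *: _); field; by rewrite h1 h2 h3.
Qed.

Lemma gf_odd (F : fieldType) (q : F) k : gf q (2 * k).+1 = 'X * gf q (2 * k).
Proof.
rewrite /gf /= mul2n odd_double /= uphalf_double doubleK.
by rewrite mul1r.
Qed.

Lemma gf_even (F : fieldType) (q : F) k : gf q (2 * k.+1) =
  gf q (2 * k) * ('X ^+ 2 - (qi q ((2 * k).+1)%:Z ^+ 2)%:P).
Proof.
rewrite /gf !mul2n !odd_double !doubleK !mul1r big_ord_recr /=.
congr (_ * ('X ^+ 2 - ((qi q _) ^+ 2)%:P)).
by rewrite !intS -mul2n PoszM; ring.
Qed.

Lemma gX_even (F : fieldType) (q : F) k : good q ->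
  'X * gd q (2 * k) = qi q ((2 * k).+1)%:Z *: gd q (2 * k).+1.
Proof.
move=> hq; rewrite /gd gf_odd qfS [RHS]scalerA [RHS]scalerAr.
have h1 := qf_neq0 (2 * k) hq; have h2 : qi q ((2 * k).+1)%:Z != 0 by apply: qi_neq0.
congr (_ * (_ *: _)); field; by rewrite h1 h2.
Qed.

Lemma gX_odd (F : fieldType) (q : F) k : good q ->
  'X * gd q (2 * k).+1 = qi q ((2 * k).+2)%:Z *: gd q (2 * k).+2
                        + qi q ((2 * k).+1)%:Z *: gd q (2 * k).
Proof.
move=> hq; have -> : (2 * k).+2 = (2 * k.+1)%N by rewrite mulnS addnC addn2.
rewrite /gd gf_even gf_odd !scalerA.
have -> : (2 * k.+1)%N = (2 * k).+2 by rewrite mulnS addnC addn2.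
rewrite !qfS.
set c := qi q ((2 * k).+1)%:Z.
have h1 := qf_neq0 (2 * k) hq; have h2 : c != 0 by apply: qi_neq0.
have h3 : qi q ((2 * k).+2)%:Z != 0 by apply: qi_neq0.
have e1 : qi q ((2 * k).+2)%:Z * (qf q (2 * k) * c * qi q ((2 * k).+2)%:Z)^-1
   = (qf q (2 * k) * c)^-1 by field; rewrite h1 h2 h3.
have e2 : c * (qf q (2 * k))^-1 = (qf q (2 * k) * c)^-1 * c ^+ 2 by field; rewrite h1 h2.
rewrite e1 e2 -!mul_polyC polyCM; ring.
Qed.

Ltac qnorm h0 := rewrite ?(mulrDr, mulrDl, mulrBr, mulrBl, mulrN, mulNr, mulr1, mul1r, mulr_natl, mulr_natr, mulrnAl, mulrnAr, mulrS, mulr0n, addr0, opprD, opprK, (@expfzDr _ _ _ _ h0), qzN, expr1z, expr0z).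

Lemma q4m1 (F : fieldType) (q : F) : good q -> q * q * (q * q) - 1 != 0.
Proof. move=> hq; have -> : q * q * (q * q) = q ^+ 4 by ring.
by rewrite subr_eq0 (hq.2 4%N isT). Qed.

Lemma q4m1' (F : fieldType) (q : F) : good q -> q * q * q * q - 1 != 0.
Proof. move=> hq; have -> : q * q * q * q = q ^+ 4 by ring.
by rewrite subr_eq0 (hq.2 4%N isT). Qed.

Lemma side4 (F : fieldType) (q : F) (M : int) : good q -> M != 0 ->
  q ^ M * q ^ M * q * q * (q ^ M * q ^ M) - q * q != 0.
Proof.
move=> hq hM; have h0 := good0 hq.
have -> : q ^ M * q ^ M * q * q * (q ^ M * q ^ M) - q * q = q * q * (q ^ (M + M + M + M) - 1).
  by rewrite !(expfzDr _ _ h0); ring.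
rewrite !mulf_neq0 // subr_eq0 qz_neq1 //; lia.
Qed.

Lemma my_coefB (F : fieldType) (q : F) (M A : int) (X Y Z : F) : good q ->
  M != 0 ->
  Y * qi2 q M = X * qi2 q (M - A - 1) -> Z * qi2 q M = X * qi2 q (A + 1) ->
  qi q (2 * M + 2) * (q ^ ((3 - 2 * (M + 1)) * (A + 1)) * X) =
  q ^ ((1 - 2 * M) * (A + 1)) * Y * qi q (2 * M - 2 * A)
  + q ^ ((1 - 2 * M) * A) * Z * qi q (2 * M - 2 * A + 1)
  + q ^ (- 2 * (2 * M)) * qi q (2 * M - 1) * (q ^ ((3 - 2 * M) * A) * Z).
Proof.
move=> hq hM0 eY eZ; have h0 := good0 hq.
have hM : qi2 q M != 0 by rewrite qi2E // mulf_neq0 ?invr_eq0 ?qi_neq0 //; lia.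
have -> : Y = X * qi2 q (M - A - 1) / qi2 q M by rewrite -eY mulfK.
have -> : Z = X * qi2 q (A + 1) / qi2 q M by rewrite -eZ mulfK.
rewrite !(qi2E _ hq) /qi; qnorm h0.
field; fside hq; by rewrite ?(q4m1 hq) ?(q4m1' hq) ?(side4 hq hM0).
Qed.

Lemma my_coefA (F : fieldType) (q : F) (M A : int) (X Z : F) : good q ->
  M != 0 -> Z * qi2 q M = X * qi2 q (A + 1) ->
  qi q (2 * M + 3) * (q ^ ((1 - 2 * (M + 1)) * (A + 1)) * X) =
  q ^ ((3 - 2 * (M + 1)) * (A + 1)) * X * qi q (2 * M - 2 * A + 1)
  + q ^ (- 2 * (2 * M + 1)) * qi q (2 * M) * (q ^ ((1 - 2 * M) * A) * Z).
Proof.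
move=> hq hM0 eZ; have h0 := good0 hq.
have hM : qi2 q M != 0 by rewrite qi2E // mulf_neq0 ?invr_eq0 ?qi_neq0 //; lia.
have -> : Z = X * qi2 q (A + 1) / qi2 q M by rewrite -eZ mulfK.
rewrite !(qi2E _ hq) /qi; qnorm h0.
field; fside hq; by rewrite ?(q4m1 hq) ?(q4m1' hq) ?(side4 hq hM0).
Qed.

Lemma qf2S (F : fieldType) (q : F) n : qf2 q n.+1 = qf2 q n * qi2 q (n.+1)%:Z.
Proof. by rewrite /qf2 big_ord_recr. Qed.

Lemma qi2_neq0 (F : fieldType) (q : F) (k : int) : good q -> k != 0 -> qi2 q k != 0.
Proof.
move=> hq hk; rewrite qi2E // mulf_neq0 ?invr_eq0 ?qi_neq0 //; lia.
Qed.

Lemma qf2_neq0 (F : fieldType) (q : F) n : good q -> qf2 q n != 0.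
Proof.
move=> hq; rewrite /qf2; apply/prodf_neq0 => i _; apply: qi2_neq0 => //.
Qed.

Lemma qi2_0 (F : fieldType) (q : F) : qi2 q 0 = 0.
Proof. by rewrite /qi2 mulr0 oppr0 subrr mul0r. Qed.

Lemma qb2_N0 (F : fieldType) (q : F) N : good q -> qb2 q N 0 = 1.
Proof.
move=> hq; rewrite /qb2 subn0 /qf2 big_ord0 mul1r divff //.
exact: (qf2_neq0 N hq).
Qed.

Definition EB (F : fieldType) (q : F) (n a : nat) : F := if (a <= n)%N then qb2 q n a else 0.

Lemma qbR2 (F : fieldType) (q : F) m a : good q -> (a < m)%N ->
  qb2 q (m - 1) a * qi2 q m%:Z = qb2 q m a.+1 * qi2 q (a%:Z + 1).
Proof.
move=> hq; case: m => // n ha.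
have -> : (n.+1 - 1 = n)%N by rewrite subSS subn0.
have -> : a%:Z + 1 = (a.+1)%:Z by rewrite intS addrC.
rewrite /qb2 subSS !qf2S.
have h1 := qf2_neq0 n hq; have h2 := qf2_neq0 a hq; have h3 := qf2_neq0 (n - a) hq.
have h4 : qi2 q (a.+1)%:Z != 0 by apply: qi2_neq0.
field; by rewrite ?h1 ?h2 ?h3 ?h4.
Qed.

Lemma qbR1 (F : fieldType) (q : F) m a : good q -> (a < m)%N ->
  EB q (m - 1) a.+1 * qi2 q m%:Z = qb2 q m a.+1 * qi2 q (m%:Z - a%:Z - 1).
Proof.
move=> hq; case: m => // n ha.
have -> : (n.+1 - 1 = n)%N by rewrite subSS subn0.
rewrite /EB; case: ltnP => hna.
  have -> : n.+1%:Z - a%:Z - 1 = (n - a.+1).+1%:Z by lia.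
  rewrite /qb2 subSS.
  have -> : (n - a = (n - a.+1).+1)%N by lia.
  rewrite !qf2S.
  have h1 := qf2_neq0 n hq; have h2 := qf2_neq0 a hq; have h3 := qf2_neq0 (n - a.+1) hq.
  have h4 : qi2 q (a.+1)%:Z != 0 by apply: qi2_neq0.
  have h5 : qi2 q (n - a.+1).+1%:Z != 0 by apply: qi2_neq0.
  field; by rewrite ?h1 ?h2 ?h3 ?h4 ?h5.
have -> : n.+1%:Z - a%:Z - 1 = 0 by lia.
by rewrite qi2_0 !mulr0 mul0r.
Qed.

Definition Cc (F : fieldType) (q : F) (m a : nat) : F :=
  q ^ ((3 - 2 * m%:Z) * a%:Z) * qb2 q (m - 1)%N a.
Definition Dc (F : fieldType) (q : F) (m a : nat) : F :=
  q ^ ((1 - 2 * m%:Z) * a%:Z) * qb2 q (m - 1)%N a.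
Definition Dx (F : fieldType) (q : F) (m a : nat) : F :=
  q ^ ((1 - 2 * m%:Z) * a%:Z) * EB q (m - 1)%N a.
Definition Ev (F : fieldType) (q : F) (m : nat) : Prop :=
  pd q (2 * m)%N = \sum_(a < m) Cc q m a *: gd q (2 * m - 2 * a)%N.
Definition Od (F : fieldType) (q : F) (m : nat) : Prop :=
  pd q (2 * m).+1%N = \sum_(a < m) Dc q m a *: gd q (2 * m - 2 * a).+1%N.

Lemma even_step (F : fieldType) (q : F) m : good q -> (0 < m)%N ->
  Od q m -> Ev q m -> Ev q m.+1.
Proof.
move=> hq hm hO hE.
have hc : qi q ((2 * m).+2)%:Z != 0 by apply: qi_neq0.
rewrite /Ev; have -> : (2 * m.+1 = (2 * m).+2)%N by lia.
apply: (scalerI hc); rewrite pd_rec // hO hE.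
have S1 : 'X * (\sum_(a < m) Dc q m a *: gd q (2 * m - 2 * a).+1) =
   \sum_(a < m) (Dc q m a * qi q ((2 * (m - a)).+2)%:Z) *: gd q (2 * (m - a)).+2
 + \sum_(a < m) (Dc q m a * qi q ((2 * (m - a)).+1)%:Z) *: gd q (2 * (m - a)).
  rewrite mulr_sumr -big_split; apply: eq_bigr => a _.
  by rewrite -scalerAr -mulnBr gX_odd // scalerDr !scalerA.
have S2 : \sum_(a < m) (Dc q m a * qi q ((2 * (m - a)).+2)%:Z) *: gd q (2 * (m - a)).+2
   = (Dx q m 0 * qi q ((2 * m).+2)%:Z) *: gd q (2 * m).+2
   + \sum_(a < m) (Dx q m a.+1 * qi q (2 * (m - a))%:Z) *: gd q (2 * (m - a)).
  transitivity (\sum_(a < m.+1) (Dx q m a * qi q ((2 * (m - a)).+2)%:Z) *: gd q (2 * (m - a)).+2).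
    rewrite big_ord_recr /=.
    have -> : Dx q m m = 0 by rewrite /Dx /EB ifF ?mulr0 //; lia.
    rewrite mul0r scale0r addr0; apply: eq_bigr => a _ /=.
    have -> // : Dx q m a = Dc q m a.
    by rewrite /Dx /EB /Dc ifT //; have := ltn_ord a; lia.
  rewrite big_ord_recl /= subn0; congr (_ + _); apply: eq_bigr => a _ /=.
  have -> // : (2 * (m - a.+1)).+2 = (2 * (m - a))%N.
  by have := ltn_ord a; lia.
have S3 : qi q ((2 * m).+2)%:Z *: \sum_(a < m.+1) Cc q m.+1 a *: gd q ((2 * m).+2 - 2 * a)
   = (qi q ((2 * m).+2)%:Z * Cc q m.+1 0) *: gd q (2 * m).+2
   + \sum_(a < m) (qi q ((2 * m).+2)%:Z * Cc q m.+1 a.+1) *: gd q (2 * (m - a)).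
  rewrite scaler_sumr big_ord_recl /= muln0 subn0 scalerA; congr (_ + _).
  apply: eq_bigr => a _ /=; rewrite scalerA.
  have -> // : ((2 * m).+2 - 2 * a.+1)%N = (2 * (m - a))%N.
  by have := ltn_ord a; lia.
have S4 : (q ^ (-2 * ((2 * m)%N)%:Z) * qi q (((2 * m)%N)%:Z - 1)) *: \sum_(a < m) Cc q m a *: gd q (2 * m - 2 * a)
   = \sum_(a < m) (q ^ (-2 * ((2 * m)%N)%:Z) * qi q (((2 * m)%N)%:Z - 1) * Cc q m a) *: gd q (2 * (m - a)).
  rewrite scaler_sumr; apply: eq_bigr => a _; by rewrite scalerA mulnBr.
rewrite S1 S2 S3 S4 -!addrA; congr (_ + _).
  congr (_ *: _).
  by rewrite /Dx /Cc /EB !mulr0 !expr0z !mul1r !(qb2_N0 _ hq) mulrC.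
rewrite addrA -!big_split; apply: eq_bigr => a _ /=; rewrite -!scalerDl; congr (_ *: _).
have ha := ltn_ord a.
have e1 : ((2 * m).+2)%:Z = 2 * m%:Z + 2 by lia.
have e2 : (m.+1)%:Z = m%:Z + 1 by lia.
have e3 : (a.+1)%:Z = a%:Z + 1 by lia.
have e4 : ((2 * (m - a))%N)%:Z = 2 * m%:Z - 2 * a%:Z by lia.
have e5 : ((2 * (m - a)).+1)%:Z = 2 * m%:Z - 2 * a%:Z + 1 by lia.
have e6 : ((2 * m)%N)%:Z = 2 * m%:Z by lia.
have e7 : (m.+1 - 1 = m)%N by rewrite subSS subn0.
rewrite /Cc /Dx /Dc e1 e2 e3 e4 e5 e6 e7.
symmetry; apply: my_coefB => //; first by lia.
  exact: qbR1.
exact: qbR2.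
Qed.

Lemma odd_step (F : fieldType) (q : F) m : good q -> (0 < m)%N ->
  Od q m -> Ev q m.+1 -> Od q m.+1.
Proof.
move=> hq hm hO hE.
have e : (2 * m.+1 = (2 * m).+2)%N by lia.
rewrite /Ev e in hE; rewrite /Od e.
have hc : qi q ((2 * m).+3)%:Z != 0 by apply: qi_neq0.
apply: (scalerI hc); rewrite pd_rec // hO hE.
have S1 : 'X * (\sum_(a < m.+1) Cc q m.+1 a *: gd q ((2 * m).+2 - 2 * a)) =
   (Cc q m.+1 0 * qi q ((2 * m).+3)%:Z) *: gd q (2 * m).+3
 + \sum_(a < m) (Cc q m.+1 a.+1 * qi q ((2 * (m - a)).+1)%:Z) *: gd q (2 * (m - a)).+1.
  rewrite big_ord_recl mulrDr mulr_sumr; congr (_ + _).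
    rewrite muln0 subn0 -scalerAr.
    have -> : ((2 * m).+2 = 2 * m.+1)%N by lia.
    rewrite gX_even // scalerA.
    by have -> : ((2 * m.+1).+1 = (2 * m).+3)%N by lia.
  apply: eq_bigr => a _ /=; rewrite -scalerAr.
  have -> : ((2 * m).+2 - 2 * a.+1 = 2 * (m - a))%N by have := ltn_ord a; lia.
  by rewrite gX_even // scalerA.
have S3 : qi q ((2 * m).+3)%:Z *: \sum_(a < m.+1) Dc q m.+1 a *: gd q ((2 * m).+2 - 2 * a).+1
   = (qi q ((2 * m).+3)%:Z * Dc q m.+1 0) *: gd q (2 * m).+3
   + \sum_(a < m) (qi q ((2 * m).+3)%:Z * Dc q m.+1 a.+1) *: gd q (2 * (m - a)).+1.
  rewrite scaler_sumr big_ord_recl /= muln0 subn0 scalerA; congr (_ + _).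
  apply: eq_bigr => a _ /=; rewrite scalerA.
  have -> // : ((2 * m).+2 - 2 * a.+1)%N = (2 * (m - a))%N.
  by have := ltn_ord a; lia.
have S4 : (q ^ (-2 * (((2 * m).+1)%N)%:Z) * qi q ((((2 * m).+1)%N)%:Z - 1)) *:
     \sum_(a < m) Dc q m a *: gd q (2 * m - 2 * a).+1
   = \sum_(a < m) (q ^ (-2 * (((2 * m).+1)%N)%:Z) * qi q ((((2 * m).+1)%N)%:Z - 1) * Dc q m a)
        *: gd q (2 * (m - a)).+1.
  rewrite scaler_sumr; apply: eq_bigr => a _; by rewrite scalerA mulnBr.
rewrite S1 S3 S4 -!addrA; congr (_ + _).
  by rewrite /Dc /Cc !mulr0 !expr0z !mul1r mulrC.
rewrite -!big_split; apply: eq_bigr => a _ /=; rewrite -!scalerDl; congr (_ *: _).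
have ha := ltn_ord a.
have e0 : (((2 * m).+1)%N)%:Z - 1 = 2 * m%:Z by lia.
have e1 : ((2 * m).+3)%:Z = 2 * m%:Z + 3 by lia.
have e1' : ((2 * m).+1)%:Z = 2 * m%:Z + 1 by lia.
have e2 : (m.+1)%:Z = m%:Z + 1 by lia.
have e3 : (a.+1)%:Z = a%:Z + 1 by lia.
have e5 : ((2 * (m - a)).+1)%:Z = 2 * m%:Z - 2 * a%:Z + 1 by lia.
have e7 : (m.+1 - 1 = m)%N by rewrite subSS subn0.
rewrite /Cc /Dc e0 e1 e1' e2 e3 e5 e7.
symmetry; apply: my_coefA => //; first by lia.
exact: qbR2.
Qed.

Lemma pf0 (F : fieldType) (q : F) : pf q 0 = 1. Proof. by []. Qed.
Lemma pf1 (F : fieldType) (q : F) : pf q 1 = 'X. Proof. by []. Qed.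

Lemma pf2 (F : fieldType) (q : F) : good q -> pf q 2 = gf q 2.
Proof.
move=> hq; rewrite pf_rec pf1 pf0 /gf /= big_ord1 mul1r mulr1.
have -> : (2 - 2 * (0.+1)%:Z) = 0 :> int by lia.
have -> : qi q (0%:Z - 1) = - 1 by rewrite sub0r qiN qi1.
have -> : (2 * (0.+1)%:Z - 1) = 1 :> int by lia.
rewrite qi1 // expr0z expr1n !mulr1 mul1r polyCN.
by rewrite expr2.
Qed.

Lemma pf3 (F : fieldType) (q : F) : good q -> pf q 3 = gf q 3.
Proof.
move=> hq; rewrite pf_rec.
have -> : ((1%N)%:Z - 1) = 0 :> int by lia.
rewrite qi0 mulr0 polyC0 mul0r addr0 pf2 //.
by rewrite -(gf_odd q 1).
Qed.

Lemma base1 (F : fieldType) (q : F) : good q -> Ev q 1 /\ Od q 1.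
Proof.
move=> hq; split.
  rewrite /Ev big_ord1 /Cc /= mulr0 expr0z mul1r qb2_N0 // scale1r.
  by rewrite /pd /gd pf2.
rewrite /Od big_ord1 /Dc /= mulr0 expr0z mul1r qb2_N0 // scale1r.
by rewrite /pd /gd pf3.
Qed.

Lemma part1 (F : fieldType) (q : F) m : good q -> (0 < m)%N -> Ev q m /\ Od q m.
Proof.
move=> hq; elim: m => // m IH _.
case: (posnP m) => [-> | hm]; first exact: base1.
case: (IH hm) => hE hO.
have hE' := even_step hq hm hO hE.
split => //; exact: odd_step hq hm hO hE'.
Qed.

Inductive Lset (F : fieldType) (q : F) : F -> Prop :=
| Lq : Lset q q
| Lqi : Lset q q^-1
| L1 : Lset q 1
| LN x : Lset q x -> Lset q (- x)
| LD x y : Lset q x -> Lset q y -> Lset q (x + y)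
| LM x y : Lset q x -> Lset q y -> Lset q (x * y).

Lemma L0 (F : fieldType) (q : F) : Lset q 0.
Proof. by have := LD (L1 q) (LN (L1 q)); rewrite subrr. Qed.

Lemma LB (F : fieldType) (q : F) x y : Lset q x -> Lset q y -> Lset q (x - y).
Proof. by move=> hx hy; apply: LD => //; apply: LN. Qed.

Lemma LXn (F : fieldType) (q : F) x n : Lset q x -> Lset q (x ^+ n).
Proof. by move=> hx; elim: n => [|n IH]; [rewrite expr0; apply: L1 | rewrite exprS; apply: LM]. Qed.

Lemma Lz (F : fieldType) (q : F) (z : int) : Lset q (q ^ z).
Proof.
case: z => n /=.
  by rewrite -exprnP; apply/LXn/Lq.
by rewrite NegzE -invr_expz -exprnP -exprVn; apply/LXn/Lqi.
Qed.

Lemma Lsum (F : fieldType) (q : F) (I : finType) (f : I -> F) :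
  (forall i, Lset q (f i)) -> Lset q (\sum_i f i).
Proof.
move=> h; apply: (big_ind (Lset q)); [exact: L0 | exact: LD | move=> i _; exact: h].
Qed.

Lemma Lprod (F : fieldType) (q : F) (I : finType) (f : I -> F) :
  (forall i, Lset q (f i)) -> Lset q (\prod_i f i).
Proof.
move=> h; apply: (big_ind (Lset q)); [exact: L1 | exact: LM | move=> i _; exact: h].
Qed.

Lemma Lqi_nat (F : fieldType) (q : F) (n : nat) : good q -> Lset q (qi q n%:Z).
Proof.
move=> hq; elim: n => [|n IH]; first by rewrite qi0; apply: L0.
rewrite intS addrC qi_add // expr1z qi1 // mulr1.
by apply: LD; [apply: LM => //; apply: Lq | apply: Lz].
Qed.

Lemma Lqz (F : fieldType) (q : F) (z : int) : good q -> Lset q (qi q z).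
Proof.
move=> hq; case: z => n; first exact: Lqi_nat.
by rewrite NegzE qiN; apply/LN/Lqi_nat.
Qed.

Definition Nn (F : fieldType) (q : F) (b : int) (K : nat) : F :=
  \prod_(j < K) qi q (2 * (b + (j.+1)%:Z)).
Definition Dd (F : fieldType) (q : F) (K : nat) : F := Nn q 0 K.
Definition Ff (F : fieldType) (q : F) (b : int) (K : nat) : F := Nn q b K / Dd q K.

Lemma NnSr (F : fieldType) (q : F) b K : Nn q b K.+1 = Nn q b K * qi q (2 * (b + (K.+1)%:Z)).
Proof. by rewrite /Nn big_ord_recr. Qed.

Lemma NnSl (F : fieldType) (q : F) b K : Nn q b K.+1 = qi q (2 * (b + 1)) * Nn q (b + 1) K.
Proof.
rewrite /Nn big_ord_recl /=; congr (_ * _); apply: eq_bigr => j _ /=.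
by rewrite /bump leq0n add1n; congr (qi q (2 * _)); lia.
Qed.

Lemma Dd_neq0 (F : fieldType) (q : F) K : good q -> Dd q K != 0.
Proof. move=> hq; rewrite /Dd /Nn; apply/prodf_neq0 => i _; apply: qi_neq0 => //; lia. Qed.

Lemma Nn0 (F : fieldType) (q : F) b : Nn q b 0 = 1.
Proof. by rewrite /Nn big_ord0. Qed.

Lemma pascal (F : fieldType) (q : F) b K : good q ->
  Ff q (b + 1) K.+1 = q ^ (2 * (K.+1)%:Z) * Ff q b K.+1 + q ^ (- (2 * (b + 1))) * Ff q (b + 1) K.
Proof.
move=> hq; rewrite /Ff /Dd NnSr [Nn q b _]NnSl NnSr add0r.
have -> : qi q (2 * (b + 1 + (K.+1)%:Z)) = q ^ (2 * (K.+1)%:Z) * qi q (2 * (b + 1))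
     + q ^ (- (2 * (b + 1))) * qi q (2 * (K.+1)%:Z).
  rewrite -qi_add //; congr (qi q _); lia.
have h1 := Dd_neq0 K hq; rewrite /Dd in h1.
have h2 : qi q (2 * (K.+1)%:Z) != 0 by apply: qi_neq0 => //; lia.
field; by rewrite ?h1 ?h2.
Qed.

Lemma Ff0 (F : fieldType) (q : F) K : good q -> Ff q 0 K = 1.
Proof. move=> hq; rewrite /Ff divff //; exact: Dd_neq0. Qed.

Lemma LFf (F : fieldType) (q : F) K b : good q -> Lset q (Ff q b K).
Proof.
move=> hq; elim: K b => [|K IH] b.
  by rewrite /Ff /Dd !Nn0 divr1; apply: L1.
have pos : forall n : nat, Lset q (Ff q n%:Z K.+1).
  elim=> [|n IHn]; first by rewrite Ff0 //; apply: L1.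
  rewrite intS addrC pascal //.
  by apply: LD; apply: LM => //; apply: Lz.
have neg : forall n : nat, Lset q (Ff q (- n%:Z) K.+1).
  elim=> [|n IHn]; first by rewrite oppr0 Ff0 //; apply: L1.
  have := pascal (- (n.+1)%:Z) K hq.
  have -> : - (n.+1)%:Z + 1 = - n%:Z by lia.
  move=> e.
  have -> : Ff q (- (n.+1)%:Z) K.+1 =
     q ^ (- (2 * (K.+1)%:Z)) * (Ff q (- n%:Z) K.+1 - q ^ (- (2 * - n%:Z)) * Ff q (- n%:Z) K).
    rewrite e addrK mulrA -expfzDr ?good0 // addNr expr0z mul1r //.
  by apply: LM; [apply: Lz | apply: LB => //; apply: LM => //; apply: Lz].
case: b => n; first exact: pos.
by rewrite NegzE; apply: neg.
Qed.

Lemma prodg (F : fieldType) (q : F) (l : int) m : good q ->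
  \prod_(i < m) (qi q (2 * l - 1) ^+ 2 - qi q (2 * (i.+1)%:Z - 1) ^+ 2)
  = Nn q (l - m%:Z - 1) (2 * m).
Proof.
move=> hq; elim: m => [|m IH]; first by rewrite big_ord0 muln0 Nn0.
rewrite big_ord_recr /= IH qi_sq //.
have -> : (2 * m.+1 = (2 * m).+2)%N by lia.
rewrite NnSl.
have -> : l - (m.+1)%:Z - 1 + 1 = l - m%:Z - 1 by lia.
rewrite NnSr.
have -> : 2 * l - 1 - (2 * (m.+1)%:Z - 1) = 2 * (l - (m.+1)%:Z - 1 + 1) by lia.
have -> : 2 * l - 1 + (2 * (m.+1)%:Z - 1) = 2 * (l - m%:Z - 1 + ((2 * m).+1)%:Z) by lia.
have -> : l - (m.+1)%:Z - 1 + 1 = l - m%:Z - 1 by lia.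
ring.
Qed.

Definition Pi (F : fieldType) (q : F) (K : nat) : F :=
  \prod_(j < K) (q ^ ((j.+1)%:Z) + q ^ (- (j.+1)%:Z)).

Lemma Dd_qf (F : fieldType) (q : F) K : good q -> Dd q K = qf q K * Pi q K.
Proof.
move=> hq; rewrite /Dd /Nn /qf /Pi -big_split; apply: eq_bigr => j _ /=.
by rewrite add0r qi_dbl.
Qed.

Lemma Pi_neq0 (F : fieldType) (q : F) K : good q -> Pi q K != 0.
Proof.
move=> hq; have := Dd_neq0 K hq; rewrite Dd_qf //.
by apply: contra => /eqP ->; rewrite mulr0.
Qed.

Lemma LPi (F : fieldType) (q : F) K : Lset q (Pi q K).
Proof. by apply: Lprod => j; apply: LD; apply: Lz. Qed.

Lemma horner_gprod (F : fieldType) (q : F) (x : F) m :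
  (\prod_(i < m) ('X ^+ 2 - (qi q (2 * (i.+1)%:Z - 1) ^+ 2)%:P)).[x]
  = \prod_(i < m) (x ^+ 2 - qi q (2 * (i.+1)%:Z - 1) ^+ 2).
Proof.
rewrite horner_prod; apply: eq_bigr => i _.
by rewrite hornerD hornerN hornerXn hornerC.
Qed.

Lemma geven (F : fieldType) (q : F) (l : int) m : good q ->
  (gd q (2 * m)).[qi q (2 * l - 1)] = Ff q (l - m%:Z - 1) (2 * m) * Pi q (2 * m).
Proof.
move=> hq; rewrite /gd /gf hornerZ mul2n odd_double doubleK mul1r horner_gprod prodg //.
rewrite -mul2n /Ff Dd_qf //.
have h1 := qf_neq0 (2 * m) hq; have h2 := Pi_neq0 (2 * m) hq.
field; by rewrite ?h1 ?h2.
Qed.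

Lemma godd (F : fieldType) (q : F) (l : int) m : good q ->
  (gd q (2 * m).+1).[qi q (2 * l - 1)] =
  Pi q (2 * m) * (Ff q (l - m%:Z - 1) (2 * m).+1 + Ff q (l - m%:Z - 1 - 1) (2 * m).+1).
Proof.
move=> hq; set a := l - m%:Z - 1.
have e1 : Ff q a (2 * m).+1 + Ff q (a - 1) (2 * m).+1 =
   Nn q a (2 * m) * (qi q (2 * (a + ((2 * m).+1)%:Z)) + qi q (2 * a))
    / (Dd q (2 * m) * qi q (2 * (0 + ((2 * m).+1)%:Z))).
  rewrite /Ff /Dd NnSr [Nn q (a - 1) _]NnSl NnSr subrK.
  have h1 := Dd_neq0 (2 * m) hq; rewrite /Dd in h1.
  have h2 : qi q (2 * (0 + ((2 * m).+1)%:Z)) != 0 by apply: qi_neq0 => //; lia.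
  field; by rewrite ?h1 ?h2.
have e2 : qi q (2 * (a + ((2 * m).+1)%:Z)) + qi q (2 * a)
   = qi q (2 * l - 1) * (q ^ ((2 * m).+1)%:Z + q ^ (- ((2 * m).+1)%:Z)).
  rewrite -qi_sum //; congr (qi q _ + qi q _); rewrite /a; lia.
have e3 : qi q (2 * (0 + ((2 * m).+1)%:Z)) =
   qi q ((2 * m).+1)%:Z * (q ^ ((2 * m).+1)%:Z + q ^ (- ((2 * m).+1)%:Z)).
  by rewrite add0r qi_dbl.
have hs : q ^ ((2 * m).+1)%:Z + q ^ (- ((2 * m).+1)%:Z) != 0.
  have : qi q (2 * (0 + ((2 * m).+1)%:Z)) != 0 by apply: qi_neq0 => //; lia.
  by rewrite e3; apply: contra => /eqP ->; rewrite mulr0.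
rewrite e1 e2 e3 Dd_qf // /gd gf_odd hornerZ hornerM hornerX /gf.
rewrite mul2n odd_double doubleK mul1r horner_gprod prodg // -mul2n qfS -/a.
have h1 := qf_neq0 (2 * m) hq; have h2 := Pi_neq0 (2 * m) hq.
have h3 : qi q ((2 * m).+1)%:Z != 0 by apply: qi_neq0.
move: hs; set s := q ^ _ + _ => hs.
field; by rewrite ?h1 ?h2 ?h3 ?hs.
Qed.

Lemma Lg (F : fieldType) (q : F) (l : int) n : good q ->
  Lset q (gd q n).[qi q (2 * l - 1)].
Proof.
move=> hq; rewrite -(odd_double_half n) -mul2n.
case: (odd n) => /=.
  by rewrite add1n godd //; apply: LM; [apply: LPi | apply: LD; apply: LFf].
by rewrite add0n geven //; apply: LM; [apply: LFf | apply: LPi].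
Qed.

Lemma qf2_Dd (F : fieldType) (q : F) a : good q -> qf2 q a * qi q 2 ^+ a = Dd q a.
Proof.
move=> hq; elim: a => [|a IH]; first by rewrite /qf2 /Dd big_ord0 Nn0 mulr1.
rewrite qf2S /Dd NnSr -/(Dd q a) -IH exprS qi2E // add0r.
have h : qi q 2 != 0 by apply: qi_neq0.
field; by rewrite h.
Qed.

Lemma qf2_add (F : fieldType) (q : F) c a : good q ->
  qf2 q (c + a) * qi q 2 ^+ a = qf2 q c * Nn q c%:Z a.
Proof.
move=> hq; elim: a => [|a IH]; first by rewrite addn0 Nn0 !mulr1.
rewrite addnS qf2S NnSr exprS qi2E //.
have -> : ((c + a).+1)%:Z = c%:Z + (a.+1)%:Z by lia.
rewrite [RHS]mulrA -IH.
have h : qi q 2 != 0 by apply: qi_neq0.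
field; by rewrite h.
Qed.

Lemma qb2_Ff (F : fieldType) (q : F) N a : good q -> (a <= N)%N ->
  qb2 q N a = Ff q (N - a)%N%:Z a.
Proof.
move=> hq hN; rewrite /qb2 /Ff.
have h2 : qi q 2 != 0 by apply: qi_neq0.
have h1 := qf2_neq0 a hq; have h3 := qf2_neq0 (N - a) hq; have h4 := Dd_neq0 a hq.
have e1 := qf2_Dd a hq.
have e2 := qf2_add (N - a) a hq; rewrite subnK // in e2.
have -> : qf2 q N = qf2 q (N - a) * Nn q (N - a)%N%:Z a / qi q 2 ^+ a.
  by rewrite -e2 mulfK ?expf_neq0.
rewrite -e1; field; by rewrite ?h1 ?h3 ?expf_neq0.
Qed.

Lemma Lqb2 (F : fieldType) (q : F) N a : good q -> (a <= N)%N -> Lset q (qb2 q N a).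
Proof. by move=> hq hN; rewrite qb2_Ff //; apply: LFf. Qed.

Lemma gen_main (F : fieldType) (q : F) : good q ->
  (forall m : nat, (1 <= m)%N ->
     pd q (2 * m)%N =
       \sum_(a < m) (q ^ ((3 - 2 * m%:Z) * a%:Z) * qb2 q (m - 1)%N a)
                      *: gd q (2 * m - 2 * a)%N
  /\ pd q (2 * m).+1%N =
       \sum_(a < m) (q ^ ((1 - 2 * m%:Z) * a%:Z) * qb2 q (m - 1)%N a)
                      *: gd q (2 * m - 2 * a).+1%N)
  /\ (forall (n : nat) (l : int), Lset q (pd q n).[qi q (2 * l - 1)]).
Proof.
move=> hq; split.
  by move=> m hm; have [hE hO] := part1 hq hm; split.
move=> n l; rewrite -(odd_double_half n) -mul2n.
case: (posnP n./2) => [-> | hm].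
  case: (odd n) => /=.
    rewrite /pd qfS qf0 mul1r qi1 // invr1 scale1r pf1 hornerX.
    exact: Lqz.
  by rewrite /pd qf0 invr1 scale1r pf0 hornerC; apply: L1.
have [hE hO] := part1 hq hm.
have term : forall (z : int) (a : 'I_n./2) k,
   Lset q ((q ^ z * qb2 q (n./2 - 1)%N a) *: gd q k).[qi q (2 * l - 1)].
  move=> z a k; rewrite hornerZ; apply: LM; last exact: Lg.
  apply: LM; first exact: Lz.
  by apply: Lqb2 => //; have := ltn_ord a; lia.
case: (odd n) => /=.
  rewrite add1n hO horner_sum; apply: Lsum => a; exact: term.
rewrite add0n hE horner_sum; apply: Lsum => a; exact: term.
Qed.

Lemma conv7 n : ppair n = pp qq n. Proof. by elim: n => //= n ->. Qed.
Lemma conv6 n : pfrakdiv n = pd qq n.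
Proof. by rewrite /pfrakdiv /pfrak conv7. Qed.

Lemma qq_neq0 : qq != 0.
Proof. by rewrite /qq tofrac_eq0 polyX_eq0. Qed.

Lemma qqXn_neq1 n : (0 < n)%N -> qq ^+ n != 1.
Proof.
move=> n0; rewrite /qq -tofracXn -tofrac1 tofrac_eq.
apply/eqP => /(congr1 (fun p : {poly int} => size p)).
by rewrite size_polyXn size_poly1; case: n n0.
Qed.

Lemma good_qq : good qq.
Proof. split; [exact: qq_neq0 | exact: qqXn_neq1]. Qed.

Lemma LP_gen (F : fieldType) (f : {rmorphism {poly int} -> F}) x :
  f 'X != 0 -> Lset (f 'X) x -> exists (p : {poly int}) (k : nat), x = f p / f 'X ^+ k.
Proof.
move=> h0; elim.
- by exists 'X, 0%N; rewrite expr0 divr1.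
- by exists 1, 1%N; rewrite rmorph1 expr1 mul1r.
- by exists 1, 0%N; rewrite rmorph1 expr0 divr1.
- move=> y _ [p [k ->]]; exists (- p), k; by rewrite rmorphN mulNr.
- move=> y z _ [p1 [k1 ->]] _ [p2 [k2 ->]].
  exists (p1 * 'X ^+ k2 + p2 * 'X ^+ k1), (k1 + k2)%N.
  rewrite rmorphD !rmorphM !rmorphXn exprD.
  field; by rewrite !expf_neq0.
- move=> y z _ [p1 [k1 ->]] _ [p2 [k2 ->]].
  exists (p1 * p2), (k1 + k2)%N.
  rewrite !rmorphM exprD.
  field; by rewrite !expf_neq0.
Qed.

Lemma Lset_Z x : Lset qq x -> in_Zqqinv x.
Proof. move=> h. have := @LP_gen _ (@FracField.tofrac {poly int} : {rmorphism {poly int} -> {fraction {poly int}}}) x qq_neq0 h. by []. Qed.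

Theorem proposition4p4 :
  (forall m : nat, (1 <= m)%N ->
     pfrakdiv (2 * m)%N =
       \sum_(a < m) (qq ^ ((3 - 2 * m%:Z) * a%:Z) * qbinom2 (m - 1)%N a)
                      *: gfrakdiv (2 * m - 2 * a)%N
  /\ pfrakdiv (2 * m).+1%N =
       \sum_(a < m) (qq ^ ((1 - 2 * m%:Z) * a%:Z) * qbinom2 (m - 1)%N a)
                      *: gfrakdiv (2 * m - 2 * a).+1%N)
  /\ (forall (n : nat) (l : int), in_Zqqinv (pfrakdiv n).[qint (2 * l - 1)]).
Proof.
have [h1 h2] := gen_main good_qq.
split.
  move=> m hm; rewrite !conv6; exact: h1 m hm.
move=> n l; rewrite conv6; apply: Lset_Z; exact: h2 n l.
Qed.
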